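(* Convolution $(\sigma,\tau)\mapsto\sigma*\tau$ is a separately continuous map from $\mathcal T\times\mathcal T$ to $\mathcal T$.
   Context: Standing setting: $(X,\|\cdot\|)$ is a separable infinite-dimensional Banach space and $d$ is a translation-invariant stable pseudometric on $X$ such that $\mathrm{Id}\colon(X,\|\cdot\|)\to(X,d)$ is a coarse equivalence ($\omega_{\mathrm{Id}}(t)=\sup\{d(x,y):\|x-y\|\le t\}<\infty$ for all $t$, $\rho_{\mathrm{Id}}(t)=\inf\{d(x,y):\|x-y\|\ge t\}\to\infty$). $\Delta$ is a countable $\|\cdot\|$-dense $\mathbb Q$-linear subspace of $X$; for $x\in\Delta$, $\bar x(\lambda,y)=d(\lambda x,y)$. $\mathcal T$ is the closure of $\{\bar x:x\in\Delta\}$ in $\mathbb R^{\mathbb Q\times\Delta}$ (pointwise topology); a defining sequence for $\sigma\in\mathcal T$ is $(x_n)\subseteq\Delta$ with $\bar x_n\to\sigma$. For $\sigma,\tau\in\mathcal T$ with defining sequences $(x_n),(y_m)$, the convolution is $\sigma*\tau=\lim_n\lim_m\overline{x_n+y_m}$ (this exists and is independent of the defining sequences). *)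

(* Defs.v *)
From Stdlib Require Import Reals Lra List QArith Qcanon Qreals.
Open Scope R_scope.

Record Banach := mkBanach {
  carrier :> Type;
  vzero : carrier;
  vadd : carrier -> carrier -> carrier;
  vopp : carrier -> carrier;
  vscal : R -> carrier -> carrier;
  vnorm : carrier -> R;
  vadd_assoc : forall x y z, vadd x (vadd y z) = vadd (vadd x y) z;
  vadd_comm : forall x y, vadd x y = vadd y x;
  vadd_0 : forall x, vadd vzero x = x;
  vadd_opp : forall x, vadd x (vopp x) = vzero;
  vscal_1 : forall x, vscal 1 x = x;
  vscal_assoc : forall a b x, vscal a (vscal b x) = vscal (a * b) x;
  vscal_distr_v : forall a x y, vscal a (vadd x y) = vadd (vscal a x) (vscal a y);
  vscal_distr_s : forall a b x, vscal (a + b) x = vadd (vscal a x) (vscal b x);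
  vnorm_eq0 : forall x, vnorm x = 0 -> x = vzero;
  vnorm_scal : forall a x, vnorm (vscal a x) = Rabs a * vnorm x;
  vnorm_triangle : forall x y, vnorm (vadd x y) <= vnorm x + vnorm y;
  vcomplete : forall u : nat -> carrier,
    (forall eps, 0 < eps -> exists N, forall n m, (n >= N)%nat -> (m >= N)%nat ->
        vnorm (vadd (u n) (vopp (u m))) < eps) ->
    exists l, forall eps, 0 < eps -> exists N, forall n, (n >= N)%nat ->
        vnorm (vadd (u n) (vopp l)) < eps
}.

Arguments vzero {b0}.
Arguments vadd {b0}.
Arguments vopp {b0}.
Arguments vscal {b0}.
Arguments vnorm {b0}.

Definition vsub {B : Banach} (x y : B) : B := vadd x (vopp y).

Fixpoint lincomb {B : Banach} (c : nat -> R) (v : nat -> B) (n : nat) : B :=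
  match n with
  | O => vzero
  | S k => vadd (lincomb c v k) (vscal (c k) (v k))
  end.

Definition separable (B : Banach) : Prop :=
  exists s : nat -> B, forall x eps, 0 < eps -> exists n, vnorm (vsub x (s n)) < eps.

Definition infinite_dimensional (B : Banach) : Prop :=
  forall n, exists v : nat -> B, forall c : nat -> R,
    lincomb c v n = vzero -> forall i, (i < n)%nat -> c i = 0.

Definition pseudometric {B : Banach} (d : B -> B -> R) : Prop :=
  (forall x, d x x = 0) /\ (forall x y, d x y = d y x) /\
  (forall x y z, d x z <= d x y + d y z).

Definition translation_invariant {B : Banach} (d : B -> B -> R) : Prop :=
  forall x y z, d (vadd x z) (vadd y z) = d x y.

Definition d_bounded_seq {B : Banach} (d : B -> B -> R) (x : nat -> B) : Prop :=
  exists z M, forall n, d (x n) z <= M.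

(* Stability (Krivine-Maurey / Kalton): for d-bounded sequences, the two
   iterated limits of d(x_n, y_m) coincide whenever they both exist. *)
Definition stable {B : Banach} (d : B -> B -> R) : Prop :=
  forall (x y : nat -> B), d_bounded_seq d x -> d_bounded_seq d y ->
  forall (a b : nat -> R) (l1 l2 : R),
    (forall n, Un_cv (fun m => d (x n) (y m)) (a n)) -> Un_cv a l1 ->
    (forall m, Un_cv (fun n => d (x n) (y m)) (b m)) -> Un_cv b l2 ->
    l1 = l2.

Definition id_coarse_equivalence {B : Banach} (d : B -> B -> R) : Prop :=
  (forall t, exists M, forall x y : B, vnorm (vsub x y) <= t -> d x y <= M) /\
  (forall K, exists t, forall x y : B, t <= vnorm (vsub x y) -> K <= d x y).

Definition good_Delta {B : Banach} (Delta : B -> Prop) : Prop :=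
  (exists e : nat -> B, forall x, Delta x -> exists n, e n = x) /\
  (forall x eps, 0 < eps -> exists y, Delta y /\ vnorm (vsub x y) < eps) /\
  Delta vzero /\
  (forall x y, Delta x -> Delta y -> Delta (vadd x y)) /\
  (forall (q : Q) x, Delta x -> Delta (vscal (Q2R q) x)).

(* Coordinates Q x Delta (Q with canonical representatives) *)
Definition coord {B : Banach} (Delta : B -> Prop) : Type :=
  (Qc * {y : B | Delta y})%type.

Definition bar {B : Banach} (d : B -> B -> R) (Delta : B -> Prop) (x : B) :
  coord Delta -> R :=
  fun p => d (vscal (Q2R (this (fst p))) x) (proj1_sig (snd p)).

(* membership in T = closure of {xbar : x in Delta} in R^(Q x Delta),
   product (pointwise) topology *)
Definition inT {B : Banach} (d : B -> B -> R) (Delta : B -> Prop)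
  (s : coord Delta -> R) : Prop :=
  forall (F : list (coord Delta)) (eps : R), 0 < eps ->
    exists x, Delta x /\ forall p, In p F -> Rabs (bar d Delta x p - s p) < eps.

Definition def_seq {B : Banach} (d : B -> B -> R) (Delta : B -> Prop)
  (xs : nat -> B) (s : coord Delta -> R) : Prop :=
  (forall n, Delta (xs n)) /\
  (forall p, Un_cv (fun n => bar d Delta (xs n) p) (s p)).

Definition is_convolution {B : Banach} (d : B -> B -> R) (Delta : B -> Prop)
  (c : (coord Delta -> R) -> (coord Delta -> R) -> (coord Delta -> R)) : Prop :=
  forall s t, inT d Delta s -> inT d Delta t ->
  forall xs ys, def_seq d Delta xs s -> def_seq d Delta ys t ->
  forall p, exists L : nat -> R,
    (forall n, Un_cv (fun m => bar d Delta (vadd (xs n) (ys m)) p) (L n)) /\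
    Un_cv L (c s t p).

(* continuity of g : T -> R^(Q x Delta), for the (subspace of the) product
   topology on both sides *)
Definition continuous_on_T {B : Banach} (d : B -> B -> R) (Delta : B -> Prop)
  (g : (coord Delta -> R) -> (coord Delta -> R)) : Prop :=
  forall s0, inT d Delta s0 ->
  forall (q : coord Delta) (eps : R), 0 < eps ->
  exists (G : list (coord Delta)) (delta : R), 0 < delta /\
    forall s, inT d Delta s ->
      (forall p, In p G -> Rabs (s p - s0 p) < delta) ->
      Rabs (g s q - g s0 q) < eps.

(* Main.v *)
Require Import Defs.
From Stdlib Require Import Reals Lra Lia ZArith List QArith Qcanon Qreals Cantor.
From Stdlib Require Import Classical ClassicalEpsilon ProofIrrelevance.
Open Scope R_scope.

Definition countable (T : Type) := exists f : nat -> T, forall x, exists n, f n = x.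

Lemma countable_prod A B : countable A -> countable B -> countable (A * B).
Proof.
  intros [f Hf] [g Hg]. exists (fun n => (f (fst (Cantor.of_nat n)), g (snd (Cantor.of_nat n)))).
  intros [a b]. destruct (Hf a) as [i Hi]; destruct (Hg b) as [j Hj].
  exists (Cantor.to_nat (i, j)). rewrite Cantor.cancel_of_to. simpl. now subst.
Qed.

Lemma countable_Z : countable Z.
Proof.
  destruct (countable_prod nat nat) as [f Hf]; try (exists (fun n => n); intros x; now exists x).
  exists (fun n => (Z.of_nat (fst (f n)) - Z.of_nat (snd (f n)))%Z).
  intros z. destruct (Hf (Z.to_nat z, Z.to_nat (- z))) as [n Hn]. exists n. rewrite Hn. simpl. lia.
Qed.

Lemma countable_pos : countable positive.
Proof.
  exists Pos.of_nat. intros p. exists (Pos.to_nat p). apply Pnat.Nat2Pos.id_max || apply Pnat.Pos2Nat.id.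
Qed.

Lemma countable_Qc : countable Qc.
Proof.
  destruct (countable_prod _ _ countable_Z countable_pos) as [f Hf].
  exists (fun n => Q2Qc (Qmake (fst (f n)) (snd (f n)))).
  intros q. destruct (Hf (Qnum (this q), Qden (this q))) as [n Hn]. exists n. rewrite Hn. simpl.
  destruct q as [[a b] hq]; apply Qc_decomp; exact hq.
Qed.

Lemma countable_Delta (B : Banach) (Delta : B -> Prop) :
  Delta vzero -> (exists e : nat -> B, forall x, Delta x -> exists n, e n = x) ->
  countable {y : B | Delta y}.
Proof.
  intros H0 [e He].
  exists (fun n => match excluded_middle_informative (Delta (e n)) with
                   | left h => exist _ (e n) h | right _ => exist _ vzero H0 end).
  intros [x Hx]. destruct (He x Hx) as [n Hn]. exists n.
  destruct (excluded_middle_informative (Delta (e n))) as [h|h].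
  - subst. f_equal. apply proof_irrelevance.
  - subst. contradiction.
Qed.

Lemma small_inv : forall eps, 0 < eps -> exists N, forall k, (k >= N)%nat -> / INR (S k) < eps.
Proof.
  intros eps He. destruct (archimed (/ eps)) as [H1 _].
  exists (Z.to_nat (up (/ eps))). intros k Hk.
  assert (Hpos : 0 < INR (S k)) by (apply lt_0_INR; lia).
  assert (INR (S k) > / eps).
  { apply Rlt_le_trans with (IZR (up (/eps))); [lra|].
    destruct (Z_lt_le_dec (up (/eps)) 0).
    - apply Rle_trans with 0; [apply IZR_le; lia| lra].
    - rewrite <- (Z2Nat.id (up (/eps))) by lia. rewrite <- INR_IZR_INZ. apply le_INR. lia. }
  rewrite <- (Rinv_inv eps). apply Rinv_lt_contravar; [|lra].
  apply Rmult_lt_0_compat; [apply Rinv_0_lt_compat|]; lra.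
Qed.

Lemma conv_bound (a : nat -> R) (l : R) (j : nat) (C : R) : 0 < C ->
  (forall k, (k > j)%nat -> Rabs (a k - l) < C * / INR (S k)) -> Un_cv a l.
Proof.
  intros HC H eps He. destruct (small_inv (eps / C)) as [N HN].
  { apply Rdiv_lt_0_compat; lra. }
  exists (max N (S j)). intros n Hn. unfold R_dist.
  apply Rlt_trans with (C * / INR (S n)). apply H; lia.
  specialize (HN n ltac:(lia)). unfold Rdiv in HN.
  apply Rmult_lt_compat_l with (r := C) in HN; [|lra].
  rewrite <- Rmult_assoc, (Rmult_comm C eps), Rmult_assoc, Rinv_r, Rmult_1_r in HN by lra. lra.
Qed.

Lemma finite_eventually (T : Type) (P : T -> nat -> Prop) (F : list T) :
  (forall p, In p F -> exists N, forall n, (n >= N)%nat -> P p n) ->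
  exists N, forall n, (n >= N)%nat -> forall p, In p F -> P p n.
Proof.
  induction F as [|a F IH]; intros H.
  - exists O. intros n _ p [].
  - destruct (H a (or_introl eq_refl)) as [N1 H1].
    destruct IH as [N2 H2]. { intros p Hp; apply H; now right. }
    exists (max N1 N2). intros n Hn p [<-|Hp]. apply H1; lia. apply H2; [lia|auto].
Qed.

Definition Elist {T : Type} (E : nat -> T) (k : nat) : list T := map E (seq 0 k).

Lemma Elist_in {T : Type} (E : nat -> T) j k : (j < k)%nat -> In (E j) (Elist E k).
Proof. intros. unfold Elist. apply in_map. apply in_seq. lia. Qed.

Lemma Un_cv_ext (a b : nat -> R) l : (forall n, a n = b n) -> Un_cv a l -> Un_cv b l.
Proof. intros H Ha eps He. destruct (Ha eps He) as [N HN]. exists N. intros n Hn. rewrite <- H. auto. Qed.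

Lemma def_seq_exists (B : Banach) (d : B -> B -> R) (Delta : B -> Prop)
  (E : nat -> coord Delta) (HE : forall p, exists n, E n = p) s :
  inT d Delta s -> exists xs, def_seq d Delta xs s.
Proof.
  intros Hs.
  assert (H : forall k, exists x, Delta x /\ forall p, In p (Elist E k) ->
             Rabs (bar d Delta x p - s p) < / INR (S k)).
  { intro k. apply Hs. apply Rinv_0_lt_compat, lt_0_INR; lia. }
  exists (fun k => proj1_sig (constructive_indefinite_description _ (H k))). split.
  - intro k. exact (proj1 (proj2_sig (constructive_indefinite_description _ (H k)))).
  - intro p. destruct (HE p) as [j Hj]; subst p. apply conv_bound with j 1; [lra|].
    intros k Hk. pose proof (proj2 (proj2_sig (constructive_indefinite_description _ (H k)))) as Hx.
    rewrite Rmult_1_l. apply Hx. apply Elist_in. lia.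
Qed.

Lemma conv_inT (B : Banach) (d : B -> B -> R) (Delta : B -> Prop)
  (c : (coord Delta -> R) -> (coord Delta -> R) -> (coord Delta -> R))
  (Hc : is_convolution d Delta c)
  (Hex : forall s, inT d Delta s -> exists xs, def_seq d Delta xs s)
  (Hadd : forall x y, Delta x -> Delta y -> Delta (vadd x y)) s t :
  inT d Delta s -> inT d Delta t -> inT d Delta (c s t).
Proof.
  intros Hs Ht F eps He.
  destruct (Hex s Hs) as [xs Hxs]. destruct (Hex t Ht) as [ys Hys].
  destruct (finite_eventually _ (fun p n => forall L : nat -> R,
     (forall n, Un_cv (fun m => bar d Delta (vadd (xs n) (ys m)) p) (L n)) ->
     Rabs (L n - c s t p) < eps / 2) F) as [N1 HN1].
  { intros p _. destruct (Hc s t Hs Ht xs ys Hxs Hys p) as [L0 [H1 H2]].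
    destruct (H2 (eps/2) ltac:(lra)) as [N HN]. exists N. intros n Hn L HL.
    rewrite (UL_sequence _ _ _ (HL n) (H1 n)). apply HN; auto. }
  destruct (finite_eventually _ (fun p m =>
     Rabs (bar d Delta (vadd (xs N1) (ys m)) p - c s t p) < eps) F) as [M HM].
  { intros p Hp. destruct (Hc s t Hs Ht xs ys Hxs Hys p) as [L0 [H1 H2]].
    destruct (H1 N1 (eps/2) ltac:(lra)) as [N HN]. exists N. intros m Hm.
    specialize (HN m Hm). unfold R_dist in HN.
    specialize (HN1 N1 (le_n _) p Hp L0 H1).
    replace (bar d Delta (vadd (xs N1) (ys m)) p - c s t p) with
      ((bar d Delta (vadd (xs N1) (ys m)) p - L0 N1) + (L0 N1 - c s t p)) by ring.
    eapply Rle_lt_trans. apply Rabs_triang. lra. }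
  exists (vadd (xs N1) (ys M)). split.
  - apply Hadd. apply (proj1 Hxs). apply (proj1 Hys).
  - intros p Hp. apply HM; auto.
Qed.

Lemma cv_bounded (a : nat -> R) l : Un_cv a l -> exists M, forall n, a n <= M.
Proof.
  intros H. destruct (cauchy_bound a (CV_Cauchy a (exist _ l H))) as [M HM].
  exists M. intro n. apply HM. exists n. reflexivity.
Qed.

Lemma vadd_0r (B : Banach) (x : B) : vadd x vzero = x.
Proof. rewrite vadd_comm. apply vadd_0. Qed.

Lemma ti_move (B : Banach) (d : B -> B -> R) (Hti : translation_invariant d) (a b Y : B) :
  d (vadd a b) Y = d a (vadd Y (vopp b)).
Proof.
  rewrite <- (Hti a (vadd Y (vopp b)) b). f_equal.
  rewrite <- vadd_assoc. rewrite (vadd_comm _ (vopp b) b), vadd_opp. symmetry; apply vadd_0r.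
Qed.

Lemma ti_w (B : Banach) (d : B -> B -> R) (Hpm : pseudometric d) (Hti : translation_invariant d) (v Y : B) :
  d (vadd Y (vopp v)) Y = d v vzero.
Proof.
  rewrite vadd_comm. rewrite <- (vadd_0 B Y) at 2. rewrite Hti.
  rewrite <- (Hti (vopp v) vzero v). rewrite (vadd_comm _ (vopp v) v), vadd_opp, vadd_0.
  destruct Hpm as [_ [Hsym _]]. apply Hsym.
Qed.

Lemma conv_comm (B : Banach) (d : B -> B -> R) (Delta : B -> Prop)
  (Hd_pm : pseudometric d) (Hd_ti : translation_invariant d) (Hd_st : stable d)
  (c : (coord Delta -> R) -> (coord Delta -> R) -> (coord Delta -> R))
  (Hc : is_convolution d Delta c)
  (Hex : forall s, inT d Delta s -> exists xs, def_seq d Delta xs s)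
  (H0 : Delta vzero) s t :
  inT d Delta s -> inT d Delta t -> forall p, c s t p = c t s p.
Proof.
  intros Hs Ht p.
  destruct (Hex s Hs) as [xs Hxs]. destruct (Hex t Ht) as [ys Hys].
  destruct (Hc s t Hs Ht xs ys Hxs Hys p) as [L [HL1 HL2]].
  destruct (Hc t s Ht Hs ys xs Hys Hxs p) as [L' [HL1' HL2']].
  destruct p as [lam [Y HY]].
  set (r := Q2R (this lam)).
  destruct (cv_bounded _ _ (proj2 Hxs (lam, exist _ vzero H0))) as [Mx HMx].
  destruct (cv_bounded _ _ (proj2 Hys (lam, exist _ vzero H0))) as [My HMy].
  apply (Hd_st (fun n => vscal r (xs n)) (fun m => vadd Y (vopp (vscal r (ys m))))) with L L'.
  - exists vzero, Mx. intro n. apply (HMx n).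
  - exists Y, My. intro m. rewrite ti_w by assumption. apply (HMy m).
  - intro n. eapply Un_cv_ext; [|apply (HL1 n)]. intro m. unfold bar; simpl.
    rewrite vscal_distr_v. apply ti_move; assumption.
  - exact HL2.
  - intro m. eapply Un_cv_ext; [|apply (HL1' m)]. intro n. unfold bar; simpl.
    rewrite vadd_comm, vscal_distr_v. apply ti_move; assumption.
  - exact HL2'.
Qed.

Notation cid := constructive_indefinite_description.

Lemma cont_s (B : Banach) (d : B -> B -> R) (Delta : B -> Prop)
  (c : (coord Delta -> R) -> (coord Delta -> R) -> (coord Delta -> R))
  (Hc : is_convolution d Delta c)
  (E : nat -> coord Delta) (HE : forall p, exists n, E n = p)
  (Hex : forall s, inT d Delta s -> exists xs, def_seq d Delta xs s) t :
  inT d Delta t -> continuous_on_T d Delta (fun s => c s t).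
Proof.
  intros Ht s0 Hs0 q eps Heps.
  apply NNPP; intro Hno.
  assert (Hk : forall k, exists s, inT d Delta s /\
     (forall p, In p (Elist E k) -> Rabs (s p - s0 p) < / INR (S k)) /\
     eps <= Rabs (c s t q - c s0 t q)).
  { intro k. apply NNPP; intro H'. apply Hno. exists (Elist E k), (/ INR (S k)). split.
    - apply Rinv_0_lt_compat, lt_0_INR; lia.
    - intros s Hs HG. apply Rnot_le_lt. intro Hle. apply H'. eauto. }
  set (sk := fun k => proj1_sig (cid _ (Hk k))).
  assert (Hsk : forall k, inT d Delta (sk k) /\
     (forall p, In p (Elist E k) -> Rabs (sk k p - s0 p) < / INR (S k)) /\
     eps <= Rabs (c (sk k) t q - c s0 t q)) by (intro k; exact (proj2_sig (cid _ (Hk k)))).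
  assert (Hx : forall k, exists xs, def_seq d Delta xs (sk k)) by (intro k; apply Hex, Hsk).
  set (xk := fun k => proj1_sig (cid _ (Hx k))).
  assert (Hxk : forall k, def_seq d Delta (xk k) (sk k)) by (intro k; exact (proj2_sig (cid _ (Hx k)))).
  destruct (Hex t Ht) as [ys Hys].
  assert (HL : forall k, exists L : nat -> R,
    (forall n, Un_cv (fun m => bar d Delta (vadd (xk k n) (ys m)) q) (L n)) /\
    Un_cv L (c (sk k) t q)).
  { intro k. apply Hc; auto. apply Hsk. }
  set (Lk := fun k => proj1_sig (cid _ (HL k))).
  assert (HLk : forall k, (forall n, Un_cv (fun m => bar d Delta (vadd (xk k n) (ys m)) q) (Lk k n)) /\
    Un_cv (Lk k) (c (sk k) t q)) by (intro k; exact (proj2_sig (cid _ (HL k)))).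
  assert (Hn : forall k, exists n,
     (forall p, In p (Elist E k) -> Rabs (bar d Delta (xk k n) p - sk k p) < / INR (S k)) /\
     Rabs (Lk k n - c (sk k) t q) < / INR (S k)).
  { intro k. assert (Hpos : 0 < / INR (S k)) by (apply Rinv_0_lt_compat, lt_0_INR; lia).
    destruct (finite_eventually _ (fun p n => Rabs (bar d Delta (xk k n) p - sk k p) < / INR (S k))
               (Elist E k)) as [N1 HN1].
    { intros p _. destruct (proj2 (Hxk k) p _ Hpos) as [N HN]. exists N. apply HN. }
    destruct (proj2 (HLk k) _ Hpos) as [N2 HN2].
    exists (max N1 N2). split. apply HN1; lia. apply HN2; lia. }
  set (nk := fun k => proj1_sig (cid _ (Hn k))).
  assert (Hnk : forall k,
     (forall p, In p (Elist E k) -> Rabs (bar d Delta (xk k (nk k)) p - sk k p) < / INR (S k)) /\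
     Rabs (Lk k (nk k) - c (sk k) t q) < / INR (S k)) by (intro k; exact (proj2_sig (cid _ (Hn k)))).
  set (x' := fun k => xk k (nk k)).
  assert (Hx' : def_seq d Delta x' s0).
  { split.
    - intro k. apply (proj1 (Hxk k)).
    - intro p. destruct (HE p) as [j Hj]; subst p. apply conv_bound with j 2; [lra|].
      intros k Hkj. assert (Hin : In (E j) (Elist E k)) by (apply Elist_in; lia).
      pose proof (proj1 (Hnk k) _ Hin). pose proof (proj1 (proj2 (Hsk k)) _ Hin).
      unfold x'.
      replace (bar d Delta (xk k (nk k)) (E j) - s0 (E j)) with
        ((bar d Delta (xk k (nk k)) (E j) - sk k (E j)) + (sk k (E j) - s0 (E j))) by ring.
      eapply Rle_lt_trans. apply Rabs_triang. lra. }
  destruct (Hc s0 t Hs0 Ht x' ys Hx' Hys q) as [L' [H1 H2]].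
  destruct (small_inv (eps/2) ltac:(lra)) as [N1 HN1].
  destruct (H2 (eps/2) ltac:(lra)) as [N2 HN2].
  set (k := max N1 N2).
  specialize (HN1 k ltac:(lia)). specialize (HN2 k ltac:(lia)). unfold R_dist in HN2.
  assert (HE' : L' k = Lk k (nk k)).
  { apply (UL_sequence _ _ _ (H1 k)). apply (proj1 (HLk k)). }
  pose proof (proj2 (Hnk k)). pose proof (proj2 (proj2 (Hsk k))).
  rewrite HE' in HN2.
  assert (Rabs (c (sk k) t q - c s0 t q) < eps).
  { replace (c (sk k) t q - c s0 t q) with
      ((c (sk k) t q - Lk k (nk k)) + (Lk k (nk k) - c s0 t q)) by ring.
    eapply Rle_lt_trans. apply Rabs_triang. rewrite Rabs_minus_sym. lra. }
  lra.
Qed.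

Theorem lemma4p5 (B : Banach) (d : B -> B -> R) (Delta : B -> Prop)
  (HB_sep : separable B) (HB_inf : infinite_dimensional B)
  (Hd_pm : pseudometric d) (Hd_ti : translation_invariant d) (Hd_st : stable d)
  (Hd_ce : id_coarse_equivalence d) (HDelta : good_Delta Delta)
  (c : (coord Delta -> R) -> (coord Delta -> R) -> (coord Delta -> R))
  (Hc : is_convolution d Delta c) :
  (forall s t, inT d Delta s -> inT d Delta t -> inT d Delta (c s t)) /\
  (forall t, inT d Delta t -> continuous_on_T d Delta (fun s => c s t)) /\
  (forall s, inT d Delta s -> continuous_on_T d Delta (fun t => c s t)).
Proof.
  destruct HDelta as [Hcnt [_ [H0 [Hadd _]]]].
  destruct (countable_prod _ _ countable_Qc (countable_Delta B Delta H0 Hcnt)) as [E HE].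
  assert (Hex : forall s, inT d Delta s -> exists xs, def_seq d Delta xs s)
    by (apply def_seq_exists with E; exact HE).
  split; [|split].
  - intros s t. apply conv_inT; assumption.
  - intros t Ht. apply cont_s with E; assumption.
  - intros s Hs t0 Ht0 q eps He.
    destruct (cont_s B d Delta c Hc E HE Hex s Hs t0 Ht0 q eps He) as [G [dl [Hdl HG]]].
    exists G, dl. split; auto. intros t Ht Hp.
    rewrite (conv_comm B d Delta Hd_pm Hd_ti Hd_st c Hc Hex H0 s t Hs Ht q).
    rewrite (conv_comm B d Delta Hd_pm Hd_ti Hd_st c Hc Hex H0 s t0 Hs Ht0 q).
    apply HG; auto.
Qed.
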